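(* Consider the system (with $c,k,b,s,\nu>0$, $h\in\mathbb{R}$) $$\frac{df}{dt}=w(f)(1-f)f-\nu f-h(1-2x),\qquad \frac{dx}{dt}=s\,x(1-x)(1-2f),\qquad w(f)=\frac{c}{1+e^{-k\frac{f}{1-f}+b}}.$$ The system undergoes a transcritical bifurcation at $(f^*,x^* )=(1/2,1)$, at the parameter value $$h^{**}=-\frac{c}{4(1+e^{b-k})}+\frac{\nu}{2},$$ where the branch of fixed points with $x=1$ (given by $h=-w(f)(1-f)f+\nu f$) intersects the branch of fixed points with $f=1/2$ (given, for $h\ne0$, by $x=\tfrac12\left(1+\tfrac{h^{**}}{h}\right)$). If $\lambda_1:=\dfrac{c k e^{b-k}}{(1+e^{b-k})^2}-\nu<0$ and $h^{**}>0$, then the two branches $x=1$ and $f=1/2$ exchange stability at this bifurcation point.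
   Context: The Jacobian of the system is $$J=\begin{pmatrix} w'(f)(f-f^2)+w(f)(1-2f)-\nu & 2h\\ -2s\,x(1-x) & s(1-2x)(1-2f)\end{pmatrix}.$$ A fixed point is stable if all eigenvalues of $J$ have negative real part and unstable if some eigenvalue has positive real part. *)

(* Defs.v *)
From Stdlib Require Import Reals Lra.
Open Scope R_scope.

Definition w (c k b f : R) : R := c / (1 + exp (- k * (f / (1 - f)) + b)).

Definition Fsys (c k b nu h f x : R) : R :=
  w c k b f * (1 - f) * f - nu * f - h * (1 - 2 * x).
Definition Gsys (s f x : R) : R := s * x * (1 - x) * (1 - 2 * f).

(* mu = re + i*im is an eigenvalue of the real 2x2 matrix [[a11,a12],[a21,a22]]:
   det(J - mu I) = 0, written out in real and imaginary parts. *)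
Definition is_eigenvalue (a11 a12 a21 a22 re im : R) : Prop :=
  (a11 - re) * (a22 - re) - im * im - a12 * a21 = 0 /\
  im * ((a11 - re) + (a22 - re)) = 0.

Definition stable_mx (a11 a12 a21 a22 : R) : Prop :=
  forall re im, is_eigenvalue a11 a12 a21 a22 re im -> re < 0.
Definition unstable_mx (a11 a12 a21 a22 : R) : Prop :=
  exists re im, is_eigenvalue a11 a12 a21 a22 re im /\ 0 < re.

(* The Jacobian of the system; w' is the derivative of w (supplied as a
   function together with the hypothesis that it is the derivative). *)
Definition J11 (c k b nu : R) (w' : R -> R) (f : R) : R :=
  w' f * (f - f ^ 2) + w c k b f * (1 - 2 * f) - nu.
Definition J12 (h : R) : R := 2 * h.
Definition J21 (s x : R) : R := - 2 * s * x * (1 - x).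
Definition J22 (s f x : R) : R := s * (1 - 2 * x) * (1 - 2 * f).

Definition stable_fp (c k b s nu h : R) (w' : R -> R) (f x : R) : Prop :=
  stable_mx (J11 c k b nu w' f) (J12 h) (J21 s x) (J22 s f x).
Definition unstable_fp (c k b s nu h : R) (w' : R -> R) (f x : R) : Prop :=
  unstable_mx (J11 c k b nu w' f) (J12 h) (J21 s x) (J22 s f x).

Definition hss (c k b nu : R) : R := - c / (4 * (1 + exp (b - k))) + nu / 2.
Definition lambda1 (c k b nu : R) : R :=
  c * k * exp (b - k) / (1 + exp (b - k)) ^ 2 - nu.
Definition h_branch_x1 (c k b nu f : R) : R := - w c k b f * (1 - f) * f + nu * f.
Definition x_branch_half (c k b nu h : R) : R := (1 + hss c k b nu / h) / 2.

(* Main.v *)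
Require Import Defs.
From Stdlib Require Import Reals Lra.
From Coquelicot Require Import Coquelicot.
Open Scope R_scope.
Definition W' (c k b f : R) : R :=
  c * exp (- k * (f / (1 - f)) + b) * k / (1 - f) ^ 2 / (1 + exp (- k * (f / (1 - f)) + b)) ^ 2.
Ltac expne := match goal with |- context [exp ?a] => pose proof (exp_pos a) end.
Lemma W'_ok c k b f : f < 1 -> is_derive (w c k b) f (W' c k b f).
Proof. intros. unfold w, W'. auto_derive.
- unfold Rdiv, Rminus in *. expne. repeat split; lra.
- unfold Rdiv, Rminus in *. expne. field. lra.
Qed.
Lemma J11_cont c k b nu : ex_derive (fun f => W' c k b f * (f - f ^ 2) + w c k b f * (1 - 2 * f) - nu) (1/2).
Proof. unfold W', w. auto_derive. unfold Rdiv, Rminus in *. expne. repeat split; try lra.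
 all: try (apply Rmult_integral_contrapositive; split); nra.
Qed.

Definition Jf c k b nu f := W' c k b f * (f - f ^ 2) + w c k b f * (1 - 2 * f) - nu.

Lemma exp_half k b : exp (- k * (1 / 2 / (1 - 1 / 2)) + b) = exp (b - k).
Proof. f_equal. field. Qed.

Lemma Jf_half c k b nu : Jf c k b nu (1/2) = lambda1 c k b nu.
Proof. unfold Jf, W', w, lambda1. rewrite exp_half.
 pose proof (exp_pos (b - k)). field. lra. Qed.

Lemma Jf_neg c k b nu : lambda1 c k b nu < 0 ->
  exists d, 0 < d /\ forall f, Rabs (f - 1/2) < d -> Jf c k b nu f < 0.
Proof. intros Hl.
 pose proof (ex_derive_continuous _ _ (J11_cont c k b nu)) as Hc.
 apply continuity_pt_filterlim in Hc.
 destruct (Hc (- lambda1 c k b nu)) as [d [Hd H]]; [lra|].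
 exists d; split; [exact Hd|]. intros f Hf.
 destruct (Req_dec f (1/2)) as [->|Hne].
 - fold (Jf c k b nu (1/2)). rewrite Jf_half. exact Hl.
 - assert (Hh := H f (conj (conj I (not_eq_sym Hne)) Hf)).
   change (Rabs (Jf c k b nu f - Jf c k b nu (1/2)) < - lambda1 c k b nu) in Hh.
   rewrite Jf_half in Hh. apply Rabs_def2 in Hh. lra.
Qed.

Lemma h_deriv c k b nu f : f < 1 ->
  derivable_pt_lim (h_branch_x1 c k b nu) f (- Jf c k b nu f).
Proof. intros Hf. apply is_derive_Reals. unfold h_branch_x1, Jf, W', w. auto_derive.
- unfold Rdiv, Rminus in *. expne. repeat split; lra.
- unfold Rdiv, Rminus in *. expne. field. lra.
Qed.

Lemma tri_stable a11 a12 a21 a22 : a21 = 0 -> a11 < 0 -> a22 < 0 -> stable_mx a11 a12 a21 a22.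
Proof. intros -> H1 H2 re im [E1 E2].
 destruct (Req_dec im 0) as [->|Him].
 - assert ((a11 - re) * (a22 - re) = 0) by lra.
   apply Rmult_integral in H. lra.
 - assert (S : (a11 - re) + (a22 - re) = 0).
   { apply (Rmult_eq_reg_l im); [lra|auto]. }
   assert (im * im > 0) by (assert (0 < im * im \/ im * im = 0) by (left; nra); nra).
   nra.
Qed.

Lemma tri_unstable a11 a12 a21 a22 : a21 = 0 -> 0 < a22 -> unstable_mx a11 a12 a21 a22.
Proof. intros -> H. exists a22, 0. split; [split; ring| exact H]. Qed.

Lemma gen_stable L a12 a21 a22 : a22 = 0 -> L < 0 -> a12 * a21 < 0 -> stable_mx L a12 a21 a22.
Proof. intros -> HL HP re im [E1 E2].
 destruct (Req_dec im 0) as [->|Him].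
 - destruct (Rlt_or_le re 0) as [|Hre]; [auto|]. nra.
 - assert (S : (L - re) + (0 - re) = 0).
   { apply (Rmult_eq_reg_l im); [lra|auto]. }
   lra.
Qed.

Lemma gen_unstable L a12 a21 a22 : a22 = 0 -> 0 < a12 * a21 -> unstable_mx L a12 a21 a22.
Proof. intros -> HP.
 set (S := sqrt (L * L + 4 * (a12 * a21))).
 assert (HS : S * S = L * L + 4 * (a12 * a21)) by (apply sqrt_sqrt; nra).
 assert (HS0 : 0 <= S) by apply sqrt_pos.
 exists ((L + S) / 2), 0. split.
 - split; [nra | ring].
 - assert (L + S > 0) by nra. lra.
Qed.

Theorem theorem5 (c k b s nu : R) (w' : R -> R)
  (Hc : 0 < c) (Hk : 0 < k) (Hb : 0 < b) (Hs : 0 < s) (Hnu : 0 < nu)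
  (Hw' : forall f, f < 1 -> derivable_pt_lim (w c k b) f (w' f))
  (Hl1 : lambda1 c k b nu < 0) (Hhss : 0 < hss c k b nu) :
  (* the two branches meet at (f,x) = (1/2,1) for h = h** *)
  h_branch_x1 c k b nu (1 / 2) = hss c k b nu /\
  x_branch_half c k b nu (hss c k b nu) = 1 /\
  (* exchange of stability near the bifurcation point *)
  exists delta, 0 < delta /\
    (forall f, Rabs (f - 1 / 2) < delta ->
       let h := h_branch_x1 c k b nu f in
       Fsys c k b nu h f 1 = 0 /\ Gsys s f 1 = 0 /\
       (h < hss c k b nu -> stable_fp c k b s nu h w' f 1) /\
       (hss c k b nu < h -> unstable_fp c k b s nu h w' f 1)) /\
    (forall h, Rabs (h - hss c k b nu) < delta ->
       let x := x_branch_half c k b nu h in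
       Fsys c k b nu h (1 / 2) x = 0 /\ Gsys s (1 / 2) x = 0 /\
       (hss c k b nu < h -> stable_fp c k b s nu h w' (1 / 2) x) /\
       (h < hss c k b nu -> unstable_fp c k b s nu h w' (1 / 2) x)).
Proof.
  assert (Ew : forall f, f < 1 -> w' f = W' c k b f).
  { intros f Hf. apply (uniqueness_limite (w c k b) f); [auto|].
    apply is_derive_Reals, W'_ok, Hf. }
  assert (Hw12 : w c k b (1/2) = c / (1 + exp (b - k))).
  { unfold w. rewrite exp_half. reflexivity. }
  pose proof (exp_pos (b - k)) as HE.
  assert (Hhalf : h_branch_x1 c k b nu (1 / 2) = hss c k b nu).
  { unfold h_branch_x1, hss. rewrite Hw12. field. lra. }
  split; [exact Hhalf|].
  split.
  { unfold x_branch_half. field. lra. }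
  destruct (Jf_neg c k b nu Hl1) as [d0 [Hd0 HJ]].
  exists (Rmin d0 (Rmin (1/2) (hss c k b nu))).
  assert (Hm1 := Rmin_l d0 (Rmin (1/2) (hss c k b nu))).
  assert (Hm2 := Rmin_r d0 (Rmin (1/2) (hss c k b nu))).
  assert (Hm3 := Rmin_l (1/2) (hss c k b nu)).
  assert (Hm4 := Rmin_r (1/2) (hss c k b nu)).
  split; [apply Rmin_glb_lt; [lra| apply Rmin_glb_lt; lra]|].
  split.
  - intros f Hf h. apply Rabs_def2 in Hf.
    assert (Hmono1 : 1/2 < f -> hss c k b nu < h).
    { intro Hlt. rewrite <- Hhalf.
      destruct (MVT_cor2 (h_branch_x1 c k b nu) (fun y => - Jf c k b nu y) (1/2) f Hlt)
        as [xi [Exi Hxi]].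
      { intros y Hy. apply h_deriv. lra. }
      assert (Jf c k b nu xi < 0) by (apply HJ; apply Rabs_def1; lra).
      unfold h. nra. }
    assert (Hmono2 : f < 1/2 -> h < hss c k b nu).
    { intro Hlt. rewrite <- Hhalf.
      destruct (MVT_cor2 (h_branch_x1 c k b nu) (fun y => - Jf c k b nu y) f (1/2) Hlt)
        as [xi [Exi Hxi]].
      { intros y Hy. apply h_deriv. lra. }
      assert (Jf c k b nu xi < 0) by (apply HJ; apply Rabs_def1; lra).
      unfold h. nra. }
    assert (HJf : J11 c k b nu w' f < 0).
    { unfold J11. rewrite Ew by lra. apply HJ. apply Rabs_def1; lra. }
    split; [unfold Fsys, h, h_branch_x1; ring|].
    split; [unfold Gsys; ring|].
    split.
    + intro Hlt. assert (f < 1/2).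
      { destruct (Rtotal_order f (1/2)) as [|[->|]]; auto.
        - unfold h in Hlt. rewrite Hhalf in Hlt. lra.
        - specialize (Hmono1 H). lra. }
      apply tri_stable; [unfold J21; ring | exact HJf | unfold J22; nra].
    + intro Hlt. assert (1/2 < f).
      { destruct (Rtotal_order f (1/2)) as [|[->|]]; auto.
        - specialize (Hmono2 H). lra.
        - unfold h in Hlt. rewrite Hhalf in Hlt. lra. }
      apply tri_unstable; [unfold J21; ring | unfold J22; nra].
  - intros h Hh x. apply Rabs_def2 in Hh.
    assert (Hh0 : 0 < h) by lra.
    assert (HJ12 : J11 c k b nu w' (1/2) = lambda1 c k b nu).
    { unfold J11. rewrite Ew by lra. apply Jf_half. }
    split.
    { unfold Fsys, x, x_branch_half. rewrite Hw12. unfold hss. field. lra. }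
    split; [unfold Gsys; replace (1 - 2 * (1 / 2)) with 0 by field; ring|].
    assert (Hprod : J12 h * J21 s x = - 4 * s * h * (x * (1 - x))).
    { unfold J12, J21. ring. }
    assert (Hx : x = (1 + hss c k b nu / h) / 2) by reflexivity.
    assert (Hq : hss c k b nu / h * h = hss c k b nu) by (field; lra).
    split.
    + intro Hlt. unfold stable_fp. rewrite HJ12.
      assert (hss c k b nu / h < 1).
      { apply (Rmult_lt_reg_r h); [lra|]. lra. }
      assert (0 < hss c k b nu / h) by (apply Rdiv_lt_0_compat; lra).
      apply gen_stable; [unfold J22; replace (1 - 2 * (1 / 2)) with 0 by field; ring | exact Hl1 |].
      rewrite Hprod. assert (0 < x * (1 - x)) by (rewrite Hx; nra).
      assert (0 < s * h) by nra. nra.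
    + intro Hlt. unfold unstable_fp.
      assert (1 < hss c k b nu / h).
      { apply (Rmult_lt_reg_r h); [lra|]. lra. }
      apply gen_unstable; [unfold J22; replace (1 - 2 * (1 / 2)) with 0 by field; ring |].
      rewrite Hprod. assert (x * (1 - x) < 0) by (rewrite Hx; nra).
      assert (0 < s * h) by nra. nra.
Qed.
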